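(* Let $K$ be a field, $\mathcal A$ a $K$-algebra, $\vartheta$ any one of the four types (left, right, pre-two-sided, two-sided), and $V$ a $K$-subspace of $\mathcal A$ such that every element of $\sqrt V$ is algebraic over $K$ and $I_{\vartheta,V}=0$. Then $V$ is a $\vartheta$-Mathieu subspace of $\mathcal A$ if and only if $V$ contains no nonzero idempotent. Consequently, if $\vartheta\neq$ pre-two-sided and $\mathcal A$ is an algebraic $K$-algebra with no non-trivial $\vartheta$-ideals, then a non-trivial $K$-subspace $M$ of $\mathcal A$ is a $\vartheta$-Mathieu subspace of $\mathcal A$ if and only if $M$ contains no nonzero idempotent of $\mathcal A$.
   Context: All algebras are associative and unital. $\sqrt S$ is the set of $a\in\mathcal A$ with $a^m\in S$ for all sufficiently large $m$. An idempotent is $e$ with $e^2=e$. A subspace is non-trivial if it is neither $0$ nor $\mathcal A$. $\mathcal A$ is algebraic if every element is algebraic over $K$. A $\vartheta$-ideal is a left ideal if $\vartheta$ = left, right ideal if $\vartheta$ = right, two-sided ideal if $\vartheta$ is pre-two-sided or two-sided. For $\vartheta\neq$ pre-two-sided, $I_{\vartheta,V}$ is the largest $\vartheta$-ideal of $\mathcal A$ contained in $V$ (the sum of all $\vartheta$-ideals contained in $V$); for $\vartheta$ = pre-two-sided, $I_{\vartheta,V}$ is the sum of the largest left ideal contained in $V$ and the largest right ideal contained in $V$. Mathieu subspaces: a $K$-subspace $V$ is a left (resp. right) Mathieu subspace if whenever $a^m\in V$ for all $m\ge1$, then for every $b\in\mathcal A$, $ba^m\in V$ (resp. $a^mb\in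 V$) for all sufficiently large $m$; pre-two-sided if both left and right; two-sided if whenever $a^m\in V$ for all $m\ge1$, for all $b,c$, $ba^mc\in V$ for all sufficiently large $m$. *)

(* Defs.v *)
From HB Require Import structures.
From mathcomp Require Import all_boot all_order all_algebra.
Set Implicit Arguments. Unset Strict Implicit. Unset Printing Implicit Defensive.
Import GRing.Theory.
Local Open Scope ring_scope.

Inductive theta := ThLeft | ThRight | ThPreTwo | ThTwo.

Section Defs.
Variables (K : fieldType) (A : algType K).

Definition is_subspace (V : A -> Prop) : Prop :=
  V 0 /\ forall (k : K) (u v : A), V u -> V v -> V (k *: u + v).

Definition is_left_ideal (I : A -> Prop) : Prop :=
  is_subspace I /\ forall b a, I a -> I (b * a).
Definition is_right_ideal (I : A -> Prop) : Prop :=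
  is_subspace I /\ forall b a, I a -> I (a * b).
Definition is_twosided_ideal (I : A -> Prop) : Prop :=
  is_left_ideal I /\ is_right_ideal I.

Definition is_theta_ideal (th : theta) (I : A -> Prop) : Prop :=
  match th with
  | ThLeft => is_left_ideal I
  | ThRight => is_right_ideal I
  | ThPreTwo | ThTwo => is_twosided_ideal I
  end.

(* the largest ideal of a given kind contained in V (= the sum of all such
   ideals contained in V; as these are closed under sums, it is their union) *)
Definition largest_ideal_in (P : (A -> Prop) -> Prop) (V : A -> Prop) : A -> Prop :=
  fun x => exists I, P I /\ (forall y, I y -> V y) /\ I x.

Definition I_theta (th : theta) (V : A -> Prop) : A -> Prop :=
  match th with
  | ThPreTwo => fun x => exists l r, x = l + r /\
        largest_ideal_in is_left_ideal V l /\ largest_ideal_in is_right_ideal V r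
  | _ => largest_ideal_in (is_theta_ideal th) V
  end.

Definition radical (V : A -> Prop) : A -> Prop :=
  fun a => exists N : nat, forall m : nat, (N <= m)%N -> V (a ^+ m).

Definition algebraic_over (a : A) : Prop :=
  exists p : {poly K}, p != 0 /\ (map_poly (in_alg A) p).[a] = 0.

Definition is_idempotent (e : A) : Prop := e * e = e.

Definition all_powers_in (V : A -> Prop) (a : A) : Prop :=
  forall m : nat, (1 <= m)%N -> V (a ^+ m).

Definition left_mathieu (V : A -> Prop) : Prop :=
  forall a, all_powers_in V a -> forall b, exists N : nat,
    forall m : nat, (N <= m)%N -> V (b * a ^+ m).
Definition right_mathieu (V : A -> Prop) : Prop :=
  forall a, all_powers_in V a -> forall b, exists N : nat,
    forall m : nat, (N <= m)%N -> V (a ^+ m * b).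
Definition twosided_mathieu (V : A -> Prop) : Prop :=
  forall a, all_powers_in V a -> forall b c, exists N : nat,
    forall m : nat, (N <= m)%N -> V (b * a ^+ m * c).

Definition is_mathieu (th : theta) (V : A -> Prop) : Prop :=
  is_subspace V /\
  match th with
  | ThLeft => left_mathieu V
  | ThRight => right_mathieu V
  | ThPreTwo => left_mathieu V /\ right_mathieu V
  | ThTwo => twosided_mathieu V
  end.

Definition no_nonzero_idempotent (V : A -> Prop) : Prop :=
  forall e, V e -> is_idempotent e -> e = 0.

Definition nontrivial_subspace (M : A -> Prop) : Prop :=
  is_subspace M /\ (exists x, M x /\ x <> 0) /\ (exists x, ~ M x).

End Defs.

(* Main.v *)
Require Import Defs.
From mathcomp Require Import all_boot all_order all_algebra.
From mathcomp Require Import ring.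
Local Open Scope ring_scope.
Import GRing.Theory.

Section Helpers.
Variables (K : fieldType) (A : algType K).

Lemma hV (V : A -> Prop) (a : A) : is_subspace V -> all_powers_in V a ->
  forall (s : {poly K}) (j : nat), (0 < j)%N -> V (horner_alg a (s * 'X^j)).
Proof.
move=> [V0 VD] Hp s; elim/poly_ind: s => [|s c IH] j Hj.
  by rewrite mul0r rmorph0.
rewrite mulrDl rmorphD /= -mulrA -exprS.
rewrite [X in _ + X]rmorphM /= ; rewrite horner_algC rmorphXn /= horner_algX mulr_algl addrC.
by apply: VD; [apply: Hp | apply: IH].
Qed.

Lemma nilp (V : A -> Prop) (a : A) : is_subspace V -> all_powers_in V a ->
  no_nonzero_idempotent V -> algebraic_over a -> exists k, a ^+ k = 0.
Proof.
move=> HV Hp Hno [p [p0 pa]].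
have hp : horner_alg a p = 0 by [].
pose p' := p * 'X.
have p'0 : p' != 0 by rewrite mulf_neq0 // polyX_eq0.
have hp' : horner_alg a p' = 0 by rewrite /p' rmorphM /= hp mul0r.
have [m [q Hq Ep']] := multiplicity_XsubC p' 0.
rewrite p'0 /= in Hq.
rewrite polyC0 subr0 in Ep'.
have m0 : (0 < m)%N.
  case: m Ep' => // Ep'; rewrite expr0 mulr1 in Ep'.
  move: Hq; rewrite -Ep' /root /p' hornerMX mulr0 eqxx //.
have cop : coprimep q ('X ^+ m).
  apply: coprimep_expr; by rewrite -[X in coprimep _ X]subr0 -polyC0 coprimep_XsubC.
have [[u v] /= Bez] := Bezout_eq1_coprimepP _ _ cop.
pose t := v * 'X ^+ m.
have Vt : V (horner_alg a t) by apply: hV.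
have E : t * t = t - v * u * p' + t * ((u * q + v * 'X ^+ m) - 1).
  by rewrite Ep' /t; ring.
rewrite Bez subrr mulr0 addr0 in E.
have ht : horner_alg a t * horner_alg a t = horner_alg a t by rewrite -rmorphM E rmorphB (rmorphM _ (v * u) p') /= hp' mulr0 subr0.
have ht0 := Hno _ Vt ht.
exists m.
have F : 'X ^+ m = u * p' + 'X ^+ m * t.
  by rewrite -[LHS]mulr1 -Bez Ep' /t; ring.
have -> : a ^+ m = horner_alg a ('X ^+ m) by rewrite rmorphXn /= horner_algX.
by rewrite F rmorphD (rmorphM _ u p') (rmorphM _ ('X ^+ m) t) /= hp' ht0 !mulr0 addr0.
Qed.

Lemma pow0 (a : A) k m : a ^+ k = 0 -> (k <= m)%N -> a ^+ m = 0.
Proof. by move=> Hk Hm; rewrite -(subnK Hm) exprD Hk mulr0. Qed.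

Lemma idem_pow (e : A) m : e * e = e -> (0 < m)%N -> e ^+ m = e.
Proof.
move=> He; case: m => // m _; elim: m => [|m IH]; first by rewrite expr1.
by rewrite exprS IH.
Qed.

Lemma left_id_of (V : A -> Prop) : is_subspace V ->
  is_left_ideal (fun x => forall b, V (b * x)).
Proof.
move=> [V0 VD]; split; [split|].
- by move=> b; rewrite mulr0.
- by move=> k u v Hu Hv b; rewrite mulrDr -scalerAr; apply: VD.
- by move=> b a Ha c; rewrite mulrA.
Qed.

Lemma right_id_of (V : A -> Prop) : is_subspace V ->
  is_right_ideal (fun x => forall b, V (x * b)).
Proof.
move=> [V0 VD]; split; [split|].
- by move=> b; rewrite mul0r.
- by move=> k u v Hu Hv b; rewrite mulrDl -scalerAl; apply: VD.
- by move=> b a Ha c; rewrite -mulrA.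
Qed.

Lemma two_id_of (V : A -> Prop) : is_subspace V ->
  is_twosided_ideal (fun x => forall b c, V (b * x * c)).
Proof.
move=> [V0 VD]; split; split; try split.
- by move=> b c; rewrite mulr0 mul0r.
- by move=> k u v Hu Hv b c; rewrite mulrDr mulrDl -scalerAr -scalerAl; apply: VD.
- by move=> b a Ha c d; rewrite mulrA; apply: Ha.
- by move=> b c; rewrite mulr0 mul0r.
- by move=> k u v Hu Hv b c; rewrite mulrDr mulrDl -scalerAr -scalerAl; apply: VD.
- by move=> b a Ha c d; rewrite -!mulrA mulrA; apply: Ha.
Qed.

Lemma zero_right (V : A -> Prop) : is_subspace V ->
  largest_ideal_in (@is_right_ideal K A) V 0.
Proof.
move=> [V0 VD]; exists (fun x => x = 0); split; [split; [split|] | split] => //.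
- by move=> k u v -> ->; rewrite scaler0 addr0.
- by move=> b a ->; rewrite mul0r.
- by move=> y ->.
Qed.

Lemma part1 (th : theta) (V : A -> Prop) :
     is_subspace V ->
     (forall a, radical V a -> algebraic_over a) ->
     (forall x, I_theta th V x -> x = 0) ->
     (is_mathieu th V <-> no_nonzero_idempotent V).
Proof.
move=> HV Halg HI; split.
- move=> [_ HM] e Ve He.
  have ep := fun m => @idem_pow e m He.
  have Pe : all_powers_in V e by move=> m Hm; rewrite ep.
  have Lm : left_mathieu V -> forall b, V (b * e).
    move=> HL b; have [N HN] := HL e Pe b.
    by have := HN N.+1 (leqnSn N); rewrite ep.
  have Rm : right_mathieu V -> forall b, V (e * b).
    move=> HR b; have [N HN] := HR e Pe b.
    by have := HN N.+1 (leqnSn N); rewrite ep.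
  have Tm : twosided_mathieu V -> forall b c, V (b * e * c).
    move=> HT b c; have [N HN] := HT e Pe b c.
    by have := HN N.+1 (leqnSn N); rewrite ep.
  have Lin : left_mathieu V -> largest_ideal_in (@is_left_ideal K A) V e.
    move=> HL; exists (fun x => forall b, V (b * x)); split; first exact: left_id_of.
    split; last exact: Lm.
    by move=> y Hy; have := Hy 1; rewrite mul1r.
  case: th HI HM => HI HM; apply: HI.
  + exact: Lin.
  + exists (fun x => forall b, V (x * b)); split; first exact: right_id_of.
    split; last exact: Rm.
    by move=> y Hy; have := Hy 1; rewrite mulr1.
  + exists e, 0; rewrite addr0; split => //; split; first exact: Lin (proj1 HM).
    exact: zero_right.
  + exists (fun x => forall b c, V (b * x * c)); split; first exact: two_id_of.
    split; last exact: Tm.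
    by move=> y Hy; have := Hy 1 1; rewrite mul1r mulr1.
- move=> Hno; split => //.
  have key : forall a, all_powers_in V a -> exists k, a ^+ k = 0.
    move=> a Ha; apply: (@nilp V a HV Ha Hno); apply: Halg; exists 1%N; exact: Ha.
  have KL : left_mathieu V.
    move=> a Ha b; have [k Hk] := key a Ha; exists k => m Hm.
    by rewrite (@pow0 a k m Hk Hm) mulr0; case: HV.
  have KR : right_mathieu V.
    move=> a Ha b; have [k Hk] := key a Ha; exists k => m Hm.
    by rewrite (@pow0 a k m Hk Hm) mul0r; case: HV.
  have KT : twosided_mathieu V.
    move=> a Ha b c; have [k Hk] := key a Ha; exists k => m Hm.
    by rewrite (@pow0 a k m Hk Hm) mulr0 mul0r; case: HV.
  by case: th HI.
Qed.

End Helpers.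

Theorem proposition4p5 (K : fieldType) (A : algType K) :
  (forall (th : theta) (V : A -> Prop),
     is_subspace V ->
     (forall a, radical V a -> algebraic_over a) ->
     (forall x, I_theta th V x -> x = 0) ->
     (is_mathieu th V <-> no_nonzero_idempotent V))
  /\
  (forall th : theta, th <> ThPreTwo ->
     (forall a : A, algebraic_over a) ->
     (forall I : A -> Prop, is_theta_ideal th I ->
        (forall x, I x -> x = 0) \/ (forall x, I x)) ->
     forall M : A -> Prop, nontrivial_subspace M ->
       (is_mathieu th M <-> no_nonzero_idempotent M)).
Proof.
split; first exact: part1.
move=> th Hth Halg Hid M [HM [_ [x0 Hx0]]].
apply: part1 => //.
have G : forall x, largest_ideal_in (is_theta_ideal th) M x -> x = 0.
  move=> x [I [HIi [HIM HIx]]]; case: (Hid I HIi) => [H|H]; first exact: H.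
  by exfalso; apply: Hx0; apply: HIM; apply: H.
by case: th Hth Hid G.
Qed.
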